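(* Let $\mathscr{M}$ be a finite rooted transition system in which every state is reachable from the initial state (connected, reachable). Let $\mathrm{Lind}$ be the Lindenbaum algebra of the propositional geometric theory $\mathbb{T}$ whose atoms are $\Delta(s,t)$ for states $s,t$ and whose axioms are $\Delta(s,t)\vdash\bot$ whenever $s\not\to t$, and $\top\vdash\bigvee_{t:\,s\to t}\Delta(s,t)$ for every state $s$ having at least one successor. Let $\mathrm{Aut}(\mathrm{graph})$ be the group of permutations $\sigma$ of the states with $s\to t\iff\sigma(s)\to\sigma(t)$, and let $\varphi:\mathrm{Aut}(\mathrm{graph})\to\mathrm{Aut}(\mathrm{Lind})$ be the group homomorphism induced by the atom permutation $\Delta(s,t)\mapsto\Delta(\sigma(s),\sigma(t))$. Then either $\ker\varphi$ is trivial or $\ker\varphi=\mathrm{Aut}(\mathrm{graph})$. Specifically, $\ker\varphi$ is trivial whenever some state has at least two successors, and $\ker\varphi=\mathrm{Aut}(\mathrm{graph})$ when every state has at most one successor.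
   Context: The Lindenbaum algebra of a propositional geometric theory is the frame presented by the atoms as generators, modulo the relations induced by the axioms (the quotient of the free frame on the atoms). *)

(* Defs.v *)
From mathcomp Require Import all_boot all_fingroup.
Set Implicit Arguments. Unset Strict Implicit. Unset Printing Implicit Defensive.

Inductive gform (A : Type) : Type :=
| gAtom : A -> gform A
| gTop : gform A
| gConj : gform A -> gform A -> gform A
| gDisj : forall J : Type, (J -> gform A) -> gform A.

Arguments gTop {A}.

Definition gBot {A : Type} : gform A := @gDisj A void (fun v => match v with end).

Fixpoint gmap (A B : Type) (f : A -> B) (p : gform A) : gform B :=
  match p with
  | gAtom a => gAtom (f a)
  | gTop => gTop
  | gConj p q => gConj (gmap f p) (gmap f q)
  | @gDisj _ J g => @gDisj B J (fun i => gmap f (g i))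
  end.

(** Derivability of sequents [p |- q] in propositional geometric logic
    (Johnstone, Elephant D1.3.1) relative to a theory [ax] (a set of
    axiom sequents). *)
Inductive gder (A : Type) (ax : gform A -> gform A -> Prop)
  : gform A -> gform A -> Prop :=
| gd_ax p q : ax p q -> gder ax p q
| gd_refl p : gder ax p p
| gd_cut p q r : gder ax p q -> gder ax q r -> gder ax p r
| gd_top p : gder ax p gTop
| gd_conjE1 p q : gder ax (gConj p q) p
| gd_conjE2 p q : gder ax (gConj p q) q
| gd_conjI p q r : gder ax p q -> gder ax p r -> gder ax p (gConj q r)
| gd_disjI (J : Type) (f : J -> gform A) (i : J) : gder ax (f i) (gDisj f)
| gd_disjE (J : Type) (f : J -> gform A) r :
    (forall i, gder ax (f i) r) -> gder ax (gDisj f) r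
| gd_distr p (J : Type) (f : J -> gform A) :
    gder ax (gConj p (gDisj f)) (gDisj (fun i => gConj p (f i))).

(** Provable equivalence: equality in the Lindenbaum algebra. *)
Definition gequiv (A : Type) (ax : gform A -> gform A -> Prop) (p q : gform A) :=
  gder ax p q /\ gder ax q p.

(** * The theory T of a transition system [e : rel S].
    Atoms are pairs [(s, t)] standing for Delta(s,t). *)
Inductive T_axiom (S : finType) (e : rel S) :
  gform (S * S) -> gform (S * S) -> Prop :=
| T_nonedge (s t : S) : ~~ e s t -> T_axiom e (gAtom (s, t)) gBot
| T_succ (s : S) : (exists t, e s t) ->
    T_axiom e gTop (gDisj (fun t : {t : S | e s t} => gAtom (s, sval t))).

Definition graph_aut (S : finType) (e : rel S) (sigma : {perm S}) : Prop :=
  forall s t, e s t = e (sigma s) (sigma t).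

Definition atom_perm (S : finType) (sigma : {perm S}) (a : S * S) : S * S :=
  (sigma a.1, sigma a.2).

(** [sigma] lies in the kernel of phi : Aut(graph) -> Aut(Lind) iff the
    induced automorphism [ [p] |-> [sigma . p] ] of the Lindenbaum algebra
    is the identity, i.e. every formula is provably equivalent to its image. *)
Definition in_ker_phi (S : finType) (e : rel S) (sigma : {perm S}) : Prop :=
  forall p : gform (S * S), gequiv (T_axiom e) (gmap (atom_perm sigma) p) p.

Definition succs (S : finType) (e : rel S) (s : S) : {set S} := [set t | e s t].

(* Main.v *)
Require Import Defs.
From mathcomp Require Import all_boot all_fingroup.
From mathcomp Require Import zify.
Set Implicit Arguments. Unset Strict Implicit. Unset Printing Implicit Defensive.

Fixpoint geval (A : Type) (v : A -> Prop) (p : gform A) : Prop :=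
  match p with
  | gAtom a => v a
  | gTop => True
  | gConj p q => geval v p /\ geval v q
  | @gDisj _ J g => exists j : J, geval v (g j)
  end.

Lemma gsound (S : finType) (e : rel S) (v : S * S -> Prop)
  (h1 : forall s t, ~~ e s t -> ~ v (s, t))
  (h2 : forall s, (exists t, e s t) -> exists2 t, e s t & v (s, t))
  p q : gder (T_axiom e) p q -> geval v p -> geval v q.
Proof.
elim => //=.
- move=> p0 q0 [s t /h1 H|s /h2 [t est vt]] /=; first by [].
  by move=> _; exists (exist _ t est).
- by move=> p0 q0 r0 _ H1 _ H2 /H1 /H2.
- by move=> p0 q0 [].
- by move=> p0 q0 [].
- by move=> p0 q0 r0 _ H1 _ H2 x; split; [apply: H1|apply: H2].
- by move=> J f i H; exists i.
- by move=> J f r0 _ H [j Hj]; apply: (H j).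
- by move=> p0 J f [Hp [j Hj]]; exists j.
Qed.

Lemma ker_atom (S : finType) (e : rel S) (sigma : {perm S}) (v : S * S -> Prop)
  (h1 : forall s t, ~~ e s t -> ~ v (s, t))
  (h2 : forall s, (exists t, e s t) -> exists2 t, e s t & v (s, t)) :
  in_ker_phi e sigma -> forall s t, v (s, t) -> v (sigma s, sigma t).
Proof.
move=> K s t H; have [_ D] := K (gAtom (s, t)).
exact: (gsound h1 h2 D).
Qed.

Lemma fixA (S : finType) (e : rel S) (sigma : {perm S}) :
  in_ker_phi e sigma -> forall s t, e s t -> sigma s = s -> sigma t = t.
Proof.
move=> K s t est fs.
pose v (a : S * S) := e a.1 a.2 /\ (a.1 = s -> a.2 = t).
have h1 : forall a b, ~~ e a b -> ~ v (a, b).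
  by move=> a b nab [] /=; rewrite (negbTE nab).
have h2 : forall a, (exists b, e a b) -> exists2 b, e a b & v (a, b).
  move=> a [b eab]; case: (eqVneq a s) => [->|ne].
    by exists t => //; split.
  by exists b => //; split => // /= E; rewrite E eqxx in ne.
have := @ker_atom S e sigma v h1 h2 K s t (conj est (fun _ => erefl)).
by rewrite /v /= fs => -[_ /(_ erefl)].
Qed.

Lemma fixB (S : finType) (e : rel S) (sigma : {perm S}) :
  graph_aut e sigma -> in_ker_phi e sigma ->
  forall s, 2 <= #|succs e s| -> sigma s = s.
Proof.
move=> G K s c2.
have [a [c [ac eas ecs]]] : exists a c, [/\ a != c, e s a & e s c].
  have /card_gt0P [a ain] : 0 < #|succs e s| by apply: leq_trans c2.
  move: c2; rewrite (cardsD1 a) ain ltnS => /card_gt0P [c].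
  rewrite !inE => /andP [ca ecs]; move: ain; rewrite inE => eas.
  by exists a, c; split => //; rewrite eq_sym.
case: (eqVneq (sigma s) s) => // nss.
pose v (u : S * S) := e u.1 u.2 /\ (u.1 = sigma s -> u.2 = sigma c) /\ (u.1 = s -> u.2 = a).
have h1 : forall a b, ~~ e a b -> ~ v (a, b).
  by move=> a0 b0 nab [] /=; rewrite (negbTE nab).
have h2 : forall u, (exists b, e u b) -> exists2 b, e u b & v (u, b).
  move=> u [b eub]; case: (eqVneq u s) => [->|ne].
    exists a => //; split => //; split => // /= E; by rewrite -E eqxx in nss.
  case: (eqVneq u (sigma s)) => [->|ne2].
    exists (sigma c); first by rewrite -G.
    by split; [rewrite -G|split => // /= E; rewrite E eqxx in nss].
  exists b => //; split => //; split => /= E; [by rewrite E eqxx in ne2|by rewrite E eqxx in ne].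
have vsa : v (s, a).
  by split => //; split => // /= E; rewrite -E eqxx in nss.
have [_ [H1 _]] := @ker_atom S e sigma v h1 h2 K s a vsa.
by move: (H1 erefl) => /perm_inj E; rewrite E eqxx in ac.
Qed.

Lemma atom_top (S : finType) (e : rel S) s t :
  (forall s, #|succs e s| <= 1) -> e s t -> gder (T_axiom e) gTop (gAtom (s, t)).
Proof.
move=> H est.
apply: (gd_cut (gd_ax (T_succ (ex_intro _ t est)))).
apply: gd_disjE => -[t' et'] /=.
have -> : t' = t.
  by have /card_le1_eqP := H s; apply; rewrite inE.
exact: gd_refl.
Qed.

Lemma atom_bot (S : finType) (e : rel S) s t q :
  ~~ e s t -> gder (T_axiom e) (gAtom (s, t)) q.
Proof.
move=> nst; apply: (gd_cut (gd_ax (T_nonedge nst))).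
by apply: gd_disjE => -[].
Qed.

Lemma part3 (S : finType) (e : rel S) :
  (forall s, #|succs e s| <= 1) ->
  forall sigma : {perm S}, graph_aut e sigma -> in_ker_phi e sigma.
Proof.
move=> H sigma G p; elim: p => /=.
- move=> [s t] /=; rewrite /atom_perm /=.
  case est: (e s t).
    have est' : e (sigma s) (sigma t) by rewrite -G.
    split; (apply: gd_cut; [exact: gd_top|exact: atom_top]).
  have nst' : ~~ e (sigma s) (sigma t) by rewrite -G est.
  by split; apply: atom_bot => //; rewrite est.
- by split; apply: gd_refl.
- move=> p [H1 H2] q [H3 H4]; split; apply: gd_conjI.
  + by eapply gd_cut; [apply: gd_conjE1|exact: H1].
  + by eapply gd_cut; [apply: gd_conjE2|exact: H3].
  + by eapply gd_cut; [apply: gd_conjE1|exact: H2].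
  + by eapply gd_cut; [apply: gd_conjE2|exact: H4].
- move=> J f IH; split; apply: gd_disjE => i.
  + by eapply gd_cut; [exact: (proj1 (IH i))|exact: (gd_disjI _ f i)].
  + eapply gd_cut; [exact: (proj2 (IH i))|].
    exact: (gd_disjI _ (fun i => gmap (atom_perm sigma) (f i)) i).
Qed.

Lemma comb (S : finType) (e : rel S) (s0 : S)
  (reach : forall s : S, connect e s0 s) (sigma : {perm S})
  (G : graph_aut e sigma)
  (A : forall s t, e s t -> sigma s = s -> sigma t = t)
  (B : forall s, 2 <= #|succs e s| -> sigma s = s)
  (b : S) (hb : 2 <= #|succs e b|) : sigma = 1%g.
Proof.
apply/permP => z; rewrite perm1; apply/eqP; apply: contraT => nz.
pose N := [set x | sigma x != x].
have uniqS : forall x y y', x \in N -> e x y -> e x y' -> y = y'.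
  move=> x y y' xN exy exy'; apply/eqP; apply: contraT => nyy.
  have : 2 <= #|succs e x|.
    apply: (@leq_trans #|[set y; y']|); first by rewrite cards2 nyy.
    apply: subset_leq_card.
    by apply/subsetP => w; rewrite !inE => /orP[]/eqP->.
  by move/B/eqP; rewrite inE in xN; rewrite (negbTE xN).
have back : forall u x, e u x -> x \in N -> u \in N.
  move=> u x eux; rewrite !inE; apply: contra => /eqP fu.
  by apply/eqP; apply: A fu.
have pred_ex : forall x, x != s0 -> exists u, e u x.
  move=> x nx; have /connectP [p pp lp] := reach x.
  case/lastP: p pp lp => [|q y] pp lp; first by rewrite lp eqxx in nx.
  exists (last s0 q); move: pp; rewrite rcons_path => /andP [_].
  by rewrite lp last_rcons.
have pathback : forall p a, path e a p -> last a p \in N -> a \in N.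
  elim => [|y p IH] a //= /andP [eay pp] lN.
  exact: back eay (IH _ pp lN).
have s0N : s0 \in N.
  have /connectP [p pp lp] := reach z.
  by apply: (pathback p) => //; rewrite -lp inE.
have pathexit : forall p a, path e a p -> a \in N -> last a p \notin N ->
    exists x y, [/\ x \in N, y \notin N & e x y].
  elim => [|y p IH] a /=; first by move=> _ ->.
  move=> /andP [eay pp] aN lN.
  case yN: (y \in N); first exact: IH pp yN lN.
  by exists a, y; rewrite yN.
have [x [y [xN yN exy]]] : exists x y, [/\ x \in N, y \notin N & e x y].
  have /connectP [p pp lp] := reach b.
  apply: (pathexit p s0) => //; rewrite -lp inE negbK; apply/eqP; exact: B.
pose out := [set x in N | [exists y, e x y && (y \notin N)]].
have xout : x \in out by rewrite inE xN; apply/existsP; exists y; rewrite exy.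
have sxout : sigma x \in out.
  rewrite !inE (inj_eq perm_inj); rewrite inE in xN; rewrite xN /=.
  apply/existsP; exists (sigma y); rewrite -G exy /=.
  by move: yN; rewrite !inE !negbK => /eqP E; rewrite !E.
pose predf x := odflt x [pick u in N | e u x].
have predfP : forall x, x \in N :\ s0 -> predf x \in N /\ e (predf x) x.
  move=> w; rewrite !inE => /andP [ws0 wN].
  rewrite /predf; case: pickP => [u0 /andP [u0N eu0]|H].
    by rewrite inE in u0N; split.
  have [u1 eu] := pred_ex w ws0.
  have uN : u1 \in N by apply: (back u1 w eu); rewrite inE.
  by move: (H u1); rewrite uN eu.
have sub : predf @: (N :\ s0) \subset N :\: out.
  apply/subsetP => u /imsetP [w wN ->].
  have [pN pe] := predfP w wN.
  rewrite inE pN andbT inE pN /=; apply/existsP => -[y' /andP [ey' y'N]].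
  have := uniqS _ _ _ pN pe ey'; move: wN; rewrite !inE => /andP [_ wN] E.
  by rewrite -E inE wN in y'N.
have inj : {in N :\ s0 &, injective predf}.
  move=> w w' wN w'N E.
  have [pN pe] := predfP w wN; have [_ pe'] := predfP w' w'N.
  by rewrite -E in pe'; exact: uniqS pN pe pe'.
have := subset_leq_card sub; rewrite card_in_imset //.
have := cardsD1 s0 N; rewrite s0N.
have := cardsID out N.
have -> : N :&: out = out by apply/setIidPr/subsetP => w; rewrite inE => /andP [].
move=> E1 E2 E3.
have le1 : #|out| <= 1 by lia.
have /card_le1_eqP := le1; move/(_ _ _ sxout xout) => E.
by move: xN; rewrite inE -E eqxx.
Qed.

Theorem mainTheorem15 (S : finType) (e : rel S) (s0 : S)
  (reach : forall s : S, connect e s0 s) :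
  ((forall sigma : {perm S}, graph_aut e sigma -> in_ker_phi e sigma -> sigma = 1%g)
   \/ (forall sigma : {perm S}, graph_aut e sigma -> in_ker_phi e sigma))
  /\ ((exists s : S, 2 <= #|succs e s|) ->
      forall sigma : {perm S}, graph_aut e sigma -> in_ker_phi e sigma -> sigma = 1%g)
  /\ ((forall s : S, #|succs e s| <= 1) ->
      forall sigma : {perm S}, graph_aut e sigma -> in_ker_phi e sigma).
Proof.
have P2 : (exists s : S, 2 <= #|succs e s|) ->
      forall sigma : {perm S}, graph_aut e sigma -> in_ker_phi e sigma -> sigma = 1%g.
  move=> [b hb] sigma G K.
  apply: (comb reach G (fixA K) (fixB G K) hb).
split; last by split; [exact: P2|exact: part3].
case: (boolP [exists s, 2 <= #|succs e s|]) => [/existsP H|/existsPn H].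
  by left; apply: P2.
right; apply: part3 => s; by rewrite leqNgt H.
Qed.
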